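(* Let $G=(V,E)$ be a finite undirected unweighted simple graph. For $u\in V$ let $\mathcal{F}_{uu}$ be the set of spanning rooted forests of $G$ in which $u$ is a root, and let $$s(u)=\frac{1}{|\mathcal{F}_{uu}|}\sum_{F\in\mathcal{F}_{uu}}|F|_u,$$ where $|F|_u$ is the number of vertices of the tree rooted at $u$ in $F$. Define $\mathrm{ForestSim}(u,v)=\frac{\min(s(u),s(v))}{\max(s(u),s(v))}$ for $u,v\in V$. Then $\mathrm{ForestSim}$ is an admissible role similarity metric, i.e. it satisfies all of: (P1) $\mathrm{ForestSim}(u,v)\in[0,1]$ for all $u,v\in V$; (P2) $\mathrm{ForestSim}(u,v)=\mathrm{ForestSim}(v,u)$ for all $u,v$; (P3) if $u$ and $v$ are automorphically equivalent then $\mathrm{ForestSim}(u,v)=1$; (P4) if $u$ and $u'$ are automorphically equivalent then $\mathrm{ForestSim}(u,v)=\mathrm{ForestSim}(u',v)$ for every $v\in V$; (P5) writing $\mathrm{Dist}(u,v)=1-\mathrm{ForestSim}(u,v)$, one has $\mathrm{Dist}(u,v)\le\mathrm{Dist}(u,u')+\mathrm{Dist}(u',v)$ for all $u,u',v\in V$.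
   Context: A spanning forest of $G$ is an acyclic subgraph containing all vertices of $G$; a spanning rooted forest is a spanning forest with one root marked in each of its trees. An automorphism of $G$ is a bijection $f:V\to V$ such that $(f(u),f(v))\in E$ for every $(u,v)\in E$. Vertices $u,v$ are automorphically equivalent if there is an automorphism $f$ with $f(u)=v$. *)

(* Defs.v *)
From mathcomp Require Import all_boot all_order all_algebra.
Set Implicit Arguments. Unset Strict Implicit. Unset Printing Implicit Defensive.
Import Order.TTheory GRing.Theory Num.Theory.
Local Open Scope ring_scope.

Section Forests.
Variables (T : finType) (e : rel T).

Definition edgesG : {set {set T}} := [set [set x; y] | x in T, y in T & e x y].

Definition frel (F : {set {set T}}) : rel T := fun x y => [set x; y] \in F.

(* F contains no cycle: no duplicate-free closed walk x_0 ... x_{k-1} x_0 with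
   k >= 3 distinct vertices (such cycles have length at most #|T|). *)
Definition acyclic (F : {set {set T}}) : bool :=
  [forall n : 'I_(#|T|.+1), forall t : (nat_of_ord n).-tuple T,
     ~~ [&& (2 < n)%N, uniq t & cycle (frel F) t]].

(* Spanning forest of G (contains all vertices; given by its edge set). *)
Definition spanning_forest (F : {set {set T}}) : bool :=
  (F \subset edgesG) && acyclic F.

Definition rooted_by (F : {set {set T}}) (R : {set T}) : bool :=
  [forall x, #|[set r in R | connect (frel F) x r]| == 1%N].

Definition Fuu (u : T) : {set ({set {set T}} * {set T})} :=
  [set p | [&& spanning_forest p.1, rooted_by p.1 p.2 & u \in p.2]].

Definition tree_size (F : {set {set T}}) (u : T) : nat :=
  #|[set x | connect (frel F) u x]|.

Definition s_forest (R : realFieldType) (u : T) : R :=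
  (\sum_(p in Fuu u) (tree_size p.1 u)%:R) / (#|Fuu u|)%:R.

Definition ForestSim (R : realFieldType) (u v : T) : R :=
  Num.min (s_forest R u) (s_forest R v) / Num.max (s_forest R u) (s_forest R v).

Definition automorphism (f : T -> T) : Prop :=
  bijective f /\ forall u v, e u v -> e (f u) (f v).

Definition aut_equiv (u v : T) : Prop :=
  exists f, automorphism f /\ f u = v.

End Forests.

(* Main.v *)
Require Import Defs.
From mathcomp Require Import all_boot all_order all_algebra.
From mathcomp Require Import ring lra.
Set Implicit Arguments. Unset Strict Implicit. Unset Printing Implicit Defensive.
Import Order.TTheory GRing.Theory Num.Theory.
Section Transport.
Variables (T : finType) (e : rel T).

Definition mapE (f : T -> T) (F : {set {set T}}) : {set {set T}} :=
  [set (f @: X) | X : {set T} in F].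

Lemma frel_map f F x y : injective f ->
  Defs.frel (mapE f F) (f x) (f y) = Defs.frel F x y.
Proof.
move=> fi; rewrite /Defs.frel /mapE.
have -> : [set f x; f y] = f @: [set x; y] by rewrite imsetU1 imset_set1.
by rewrite mem_imset //; apply: imset_inj.
Qed.

Lemma connect_tr (f : T -> T) (r r' : rel T) :
  (forall a b, r' (f a) (f b) = r a b) ->
  forall a b, connect r a b -> connect r' (f a) (f b).
Proof.
move=> H a b /connectP [p pp ->]; apply/connectP; exists (map f p).
  by rewrite path_map; rewrite (eq_path (e' := r)) //; move=> x y /=; rewrite H.
by rewrite last_map.
Qed.

Definition acycR (r : rel T) : bool :=
  [forall n : 'I_(#|T|.+1), forall t : (nat_of_ord n).-tuple T,
     ~~ [&& (2 < n)%N, uniq t & cycle r t]].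

Lemma acyc_tr (f : T -> T) (r r' : rel T) : injective f ->
  (forall a b, r' (f a) (f b) = r a b) -> acycR r' -> acycR r.
Proof.
move=> fi H /forallP A; apply/forallP => n; apply/forallP => t.
have := forallP (A n) (map_tuple f t).
rewrite /= map_inj_uniq // cycle_map.
by rewrite (eq_cycle (e' := r)) //; move=> x y /=; rewrite H.
Qed.

Lemma bij_cancel_inv (f : T -> T) : bijective f -> exists g, cancel f g /\ cancel g f.
Proof. by case=> g fg gf; exists g. Qed.

Definition hmap (f : T -> T) (p : {set {set T}} * {set T}) :=
  (mapE f p.1, f @: p.2).

Lemma edges_rev f : automorphism e f -> forall x y, e (f x) (f y) -> e x y.
Proof.
case=> fb fe x y.
have fi : injective f by apply: bij_inj.
pose P := [set p : T * T | e p.1 p.2].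
pose h := fun p : T * T => (f p.1, f p.2).
have hi : injective h by move=> [a b] [c d] [] /fi -> /fi ->.
have sub : h @: P \subset P.
  apply/subsetP => q /imsetP [[a b]]; rewrite /P inE /= => ab ->; by rewrite inE /=; apply: fe.
have : h @: P == P by rewrite eqEcard sub (card_imset _ hi) leqnn.
move=> /eqP EP Hxy.
have : (h (x, y)) \in h @: P by rewrite EP inE.
by rewrite mem_imset // inE.
Qed.

Lemma aut_inv f g : automorphism e f -> cancel f g -> cancel g f -> automorphism e g.
Proof.
move=> af fg gf; split; first by exists f.
move=> u v euv; apply: (edges_rev af); by rewrite !gf.
Qed.

Lemma step f g u p : automorphism e f -> cancel f g -> cancel g f ->
  p \in Fuu e u -> hmap f p \in Fuu e (f u).
Proof.
move=> [fb fe] fg gf; have fi : injective f by apply: can_inj fg.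
case: p => F R; rewrite !inE /= => /and3P [/andP [sub ac] rb uR].
apply/and3P; split.
- apply/andP; split.
    apply/subsetP => Y /imsetP [X XF ->].
    move: (subsetP sub X XF); case/imset2P => x y _; rewrite inE => exy ->.
    by rewrite imsetU1 imset_set1; apply/imset2P; exists (f x) (f y) => //; rewrite inE fe.
  move: ac; rewrite /acyclic -/(acycR _) -/(acycR _).
  apply: (acyc_tr (f := g)); first by apply: can_inj gf.
  by move=> a b; rewrite -{2}(gf a) -{2}(gf b) frel_map.
- apply/forallP => x; move/forallP: rb => /(_ (g x)).
  have -> : [set r in f @: R | connect (Defs.frel (mapE f F)) x r] =
            f @: [set r in R | connect (Defs.frel F) (g x) r].
    apply/setP => r; apply/idP/idP.
      rewrite inE => /andP [/imsetP [r' r'R ->] c]; apply/imsetP; exists r' => //.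
      rewrite inE r'R /=; rewrite -(fg r'); apply: (connect_tr (f := g)) c.
      by move=> a b; rewrite -{2}(gf a) -{2}(gf b) frel_map.
    case/imsetP => r' ; rewrite inE => /andP [r'R c] ->; rewrite inE mem_imset // r'R /=.
    rewrite -(gf x); apply: (connect_tr (r := Defs.frel F)) c.
    by move=> a b; rewrite frel_map.
  by rewrite card_imset.
- by rewrite mem_imset.
Qed.

Lemma tree_size_map f g F u : cancel f g -> cancel g f ->
  tree_size (mapE f F) (f u) = tree_size F u.
Proof.
move=> fg gf; have fi : injective f by apply: can_inj fg.
rewrite /tree_size.
have -> : [set x | connect (Defs.frel (mapE f F)) (f u) x] = f @: [set x | connect (Defs.frel F) u x].
  apply/setP => x; rewrite inE; apply/idP/idP => c.
    rewrite -(gf x) mem_imset // inE -(fg u).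
    apply: (connect_tr (f := g)) c.
    by move=> a b; rewrite -{2}(gf a) -{2}(gf b) frel_map.
  case/imsetP: c => y; rewrite inE => c ->.
  by apply: (connect_tr (r := Defs.frel F)) c => a b; rewrite frel_map.
by rewrite card_imset.
Qed.

End Transport.

Local Open Scope ring_scope.
Section S.
Variable R : realFieldType.
Definition m (a b : R) := Num.min a b / Num.max a b.
Lemma msym a b : m a b = m b a. Proof. by rewrite /m minC maxC. Qed.
Lemma mle a b : a <= b -> m a b = a / b. Proof. by move=> h; rewrite /m min_l // max_r. Qed.
Lemma divle1 (p q : R) : 0 < p -> p <= q -> 0 < p / q <= 1.
Proof. move=> p0 pq; have q0 : 0 < q by apply: lt_le_trans pq.
by rewrite divr_gt0 //= ler_pdivrMr // mul1r. Qed.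
Lemma sorted_tri (p q r : R) : 0 < p -> p <= q -> q <= r ->
  [/\ 1 - m p r <= (1 - m p q) + (1 - m q r),
      1 - m q r <= (1 - m q p) + (1 - m p r) &
      1 - m p q <= (1 - m p r) + (1 - m r q)].
Proof.
move=> p0 pq qr; have q0 : 0 < q by apply: lt_le_trans pq.
have r0 : 0 < r by apply: lt_le_trans qr.
rewrite !(msym q p) !(msym r q) (mle pq) (mle qr) (mle (le_trans pq qr)).
have /andP [X0 X1] := divle1 p0 pq. have /andP [Y0 Y1] := divle1 q0 qr.
have -> : p / r = (p / q) * (q / r) by field; rewrite !gt_eqF.
move: X0 X1 Y0 Y1; set X := p / q; set Y := q / r => X0 X1 Y0 Y1.
split; nra.
Qed.
Lemma tri (a b c : R) : 0 < a -> 0 < b -> 0 < c -> 1 - m a c <= (1 - m a b) + (1 - m b c).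
Proof.
move=> a0 b0 c0.
case: (leP a b) => ab; case: (leP b c) => bc; case: (leP a c) => ac;
[ move: (sorted_tri a0 ab bc) | move: (sorted_tri a0 ab bc)
| move: (sorted_tri a0 ac (ltW bc)) | move: (sorted_tri c0 (ltW ac) ab)
| move: (sorted_tri b0 (ltW ab) ac) | move: (sorted_tri b0 bc (ltW ac))
| move: (sorted_tri c0 (ltW bc) (ltW ab)) | move: (sorted_tri c0 (ltW bc) (ltW ab)) ];
rewrite ?(msym b a) ?(msym c a) ?(msym c b); case=> h1 h2 h3;
lra.
Qed.


Variables (T : finType) (e : rel T).

Lemma hmapK (f g : T -> T) : cancel f g -> cancel (hmap f) (hmap g).
Proof.
move=> fg [F Rr]; rewrite /hmap /mapE /=.
have gfX : forall X : {set T}, g @: (f @: X) = X.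
  move=> X; rewrite -imset_comp.
  have -> : [set (g \o f) x | x in X] = [set x | x in X] by apply: eq_imset => x /=; rewrite fg.
  by rewrite imset_id.
rewrite gfX -imset_comp.
have -> : [set ((fun X : {set T} => g @: X) \o (fun X : {set T} => f @: X)) x | x in F] = [set x | x in F].
  by apply: eq_imset => X /=; rewrite gfX.
by rewrite imset_id.
Qed.

Lemma s_aut (f : T -> T) u : automorphism e f -> s_forest e R (f u) = s_forest e R u.
Proof.
move=> af; have [[g fg gf] _] := af.
have ag := aut_inv af fg gf.
have memE : forall p, (hmap f p \in Fuu e (f u)) = (p \in Fuu e u).
  move=> p; apply/idP/idP; last by apply: step af fg gf.
  by move=> /(step ag gf fg); rewrite (hmapK fg) fg.
have hb : bijective (hmap f) by exists (hmap g); apply: hmapK.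
rewrite /s_forest.
have -> : \sum_(p in Fuu e (f u)) (tree_size p.1 (f u))%:R = \sum_(p in Fuu e u) (tree_size p.1 u)%:R :> R.
  rewrite (reindex (hmap f)); last by apply: onW_bij.
  apply: eq_big => p; first exact: memE.
  by move=> _; rewrite /= (tree_size_map _ _ fg gf).
have -> : #|Fuu e (f u)| = #|Fuu e u|.
  rewrite -!sum1_card (reindex (hmap f)); last by apply: onW_bij.
  by apply: eq_bigl => p; exact: memE.
by [].
Qed.

Lemma mem0 u : (set0, setT) \in Fuu e u.
Proof.
rewrite inE /=; apply/and3P; split.
- rewrite /spanning_forest sub0set /=.
  apply/forallP => n; apply/forallP => t.
  have := size_tuple t; case: t => [[|x s] st] /= sz.
    by rewrite -sz.
  rewrite /cycle; case: s {st sz} => [|y w] /=;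
  by rewrite /Defs.frel in_set0 /= ?andbF.
- apply/forallP => x.
  rewrite (_ : [set r in setT | connect (Defs.frel set0) x r] = [set x]) ?cards1 //.
  apply/setP => r; rewrite !inE /=; apply/idP/idP.
    case/connectP => [[|y p]] /=; first by move=> _ ->.
    by rewrite /Defs.frel in_set0.
  by move/eqP <-; apply: connect0.
- by rewrite in_setT.
Qed.

Lemma s_pos u : 0 < s_forest e R u.
Proof.
rewrite /s_forest divr_gt0 //; last first.
  by rewrite ltr0n; apply/card_gt0P; exists (set0, setT); apply: mem0.
rewrite -natr_sum ltr0n (bigD1 _ (mem0 u)) /= addn_gt0; apply/orP; left.
by apply/card_gt0P; exists u; rewrite inE connect0.
Qed.

Lemma m01 (a b : R) : 0 < a -> 0 < b -> 0 <= m a b <= 1.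
Proof.
move=> a0 b0; case: (leP a b) => ab.
  by rewrite mle //; have /andP [h1 h2] := divle1 a0 ab; by rewrite (ltW h1) h2.
rewrite msym (mle (ltW ab)).
have /andP [h1 h2] := divle1 b0 (ltW ab); by rewrite (ltW h1) h2.
Qed.

End S.

Theorem theorem4p6 (R : realFieldType) (T : finType) (e : rel T)
    (e_sym : symmetric e) (e_irr : irreflexive e) :
  let sim := ForestSim e R in
  [/\ (forall u v, 0 <= sim u v <= 1),
      (forall u v, sim u v = sim v u),
      (forall u v, aut_equiv e u v -> sim u v = 1),
      (forall u u' v, aut_equiv e u u' -> sim u v = sim u' v)
    & (forall u u' v, 1 - sim u v <= (1 - sim u u') + (1 - sim u' v))].
Proof.
move=> sim.
have E : forall u v, sim u v = m (s_forest e R u) (s_forest e R v) by [].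
split.
- by move=> u v; rewrite E m01 // s_pos.
- by move=> u v; rewrite !E msym.
- move=> u v [f [af <-]]; rewrite E s_aut // /m minxx maxxx divff //.
  by rewrite gt_eqF // s_pos.
- by move=> u u' v [f [af <-]]; rewrite !E s_aut.
- by move=> u u' v; rewrite !E; apply: tri; apply: s_pos.
Qed.
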